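(* Let $G$ be an $\alpha_1$-metric graph. For every pair of vertices $s,t$ of $G$ with $d(s,t)\ge 4$ there exists a vertex $c\in I(s,t)\setminus\{s,t\}$ such that $e(c)<\max\{e(s),e(t)\}$.
   Context: All graphs are finite, connected, unweighted, undirected, simple; $d(u,v)$ is the shortest-path distance. $I(u,v)=\{x: d(u,x)+d(x,v)=d(u,v)\}$. A graph is $\alpha_1$-metric if for all vertices $u,v,w,x$: whenever $v\in I(u,w)$, $w\in I(v,x)$ and $v,w$ are adjacent, then $d(u,x)\ge d(u,v)+d(v,x)-1$. The eccentricity is $e(v)=\max_u d(u,v)$. *)

(* Defs.v *)
From mathcomp Require Import all_boot.
Set Implicit Arguments. Unset Strict Implicit. Unset Printing Implicit Defensive.

Section Graph.
Variable (T : finType) (e : rel T).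

Fixpoint reachn (n : nat) (u v : T) : bool :=
  match n with
  | 0 => u == v
  | n'.+1 => (u == v) || [exists w, e u w && reachn n' w v]
  end.

(* shortest-path distance: least n with a walk of length <= n
   (every distance in a connected graph is < #|T|) *)
Definition dist (u v : T) : nat := find (fun n => reachn n u v) (iota 0 #|T|).

Definition interval (u v : T) : {set T} :=
  [set x | dist u x + dist x v == dist u v].

Definition ecc (v : T) : nat := \max_(u : T) dist u v.

Definition simple_graph : Prop := symmetric e /\ irreflexive e.
Definition connected_graph : Prop := forall u v : T, connect e u v.

Definition alpha1_metric : Prop :=
  forall u v w x : T,
    v \in interval u w -> w \in interval v x -> e v w ->
    dist u v + dist v x - 1 <= dist u x.

End Graph.

(* Main.v *)
Require Import Defs.
From mathcomp Require Import all_boot.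
From mathcomp Require Import zify.

Set Implicit Arguments. Unset Strict Implicit. Unset Printing Implicit Defensive.

Section Proofs.
Variables (T : finType) (e : rel T).
Hypothesis esym : symmetric e.
Hypothesis eirr : irreflexive e.
Hypothesis econn : connected_graph e.
Hypothesis ha1 : alpha1_metric e.

Local Notation d := (dist e).


Lemma reachn_refl n u : reachn e n u u.
Proof. by case: n => [|n] /=; rewrite eqxx. Qed.

Lemma reachn_mono n m u v : n <= m -> reachn e n u v -> reachn e m u v.
Proof.
elim: n m u => [|n IH] m u /=.
  by move=> _ /eqP ->; apply: reachn_refl.
case: m => [//|m] /= le.
case/orP => [->//|/existsP [w /andP [euw r]]].
apply/orP; right; apply/existsP; exists w; rewrite euw /=; exact: IH.
Qed.

Lemma reachn_trans m n u v w :
  reachn e m u v -> reachn e n v w -> reachn e (m + n) u w.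
Proof.
elim: m u => [|m IH] u /=.
  by move/eqP ->.
case/orP => [/eqP -> H|/existsP [x /andP [eux r]] H].
  exact: (reachn_mono (leq_addl m.+1 n) H).
apply/orP; right; apply/existsP; exists x.
by rewrite eux /=; apply: IH.
Qed.

Lemma reachn_sym n u v : reachn e n u v -> reachn e n v u.
Proof.
elim: n u => [|n IH] u /=.
  by rewrite eq_sym.
case/orP => [/eqP ->|/existsP [w /andP [euw r]]]; first by rewrite eqxx.
have H1 : reachn e 1 w u.
  by rewrite /=; apply/orP; right; apply/existsP; exists u; rewrite eqxx andbT esym.
have := reachn_trans (IH _ r) H1.
by rewrite addn1.
Qed.

Lemma path_reach u p : path e u p -> reachn e (size p) u (last u p).
Proof.
elim: p u => [|x p IH] u /=.
  by rewrite eqxx.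
move/andP => [eux pp].
apply/orP; right; apply/existsP; exists x; rewrite eux /=; exact: IH.
Qed.

Lemma reach_bound u v : exists2 n, n < #|T| & reachn e n u v.
Proof.
have /connectP [p pp ->] := econn u v.
case: (shortenP pp) => p' pp' up' _.
exists (size p'); last exact: path_reach.
have := max_card (mem (u :: p')).
by rewrite (card_uniqP up') /=.
Qed.

Lemma has_reach u v : has (fun n => reachn e n u v) (iota 0 #|T|).
Proof.
have [n lt r] := reach_bound u v.
by apply/hasP; exists n => //; rewrite mem_iota.
Qed.

Lemma dist_lt u v : d u v < #|T|.
Proof. by have := has_reach u v; rewrite has_find size_iota. Qed.

Lemma dist_reach u v : reachn e (d u v) u v.
Proof.
have := nth_find 0 (has_reach u v).
by rewrite nth_iota ?add0n //; apply: dist_lt.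
Qed.

Lemma dist_min n u v : reachn e n u v -> d u v <= n.
Proof.
move=> r.
case: (leqP #|T| n) => [le|lt].
  by apply: leq_trans le; apply: ltnW; apply: dist_lt.
rewrite leqNgt; apply/negP => lt2.
have := before_find 0 lt2.
by rewrite nth_iota ?add0n // r.
Qed.

Lemma dist_leE n u v : (d u v <= n) = reachn e n u v.
Proof.
apply/idP/idP; last exact: dist_min.
by move=> le; apply: reachn_mono le (dist_reach u v).
Qed.

Lemma distC u v : d u v = d v u.
Proof.
by apply/eqP; rewrite eqn_leq !dist_min // reachn_sym // dist_reach.
Qed.

Lemma dist_tri u v w : d u w <= d u v + d v w.
Proof. by apply: dist_min; apply: reachn_trans; apply: dist_reach. Qed.

Lemma dist0E u v : (d u v == 0) = (u == v).
Proof. by rewrite -leqn0 dist_leE. Qed.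

Lemma distxx u : d u u = 0.
Proof. by apply/eqP; rewrite dist0E. Qed.

Lemma dist_le1 u v : (d u v <= 1) = (u == v) || e u v.
Proof.
rewrite dist_leE /=; congr (_ || _).
apply/existsP/idP => [[w /andP [euw /eqP <-]]//|euv].
by exists v; rewrite euv eqxx.
Qed.

Lemma dist_edge u v : e u v -> d u v = 1.
Proof.
move=> euv.
have ne : u != v by apply/negP => /eqP E; move: euv; rewrite E eirr.
have le : d u v <= 1 by rewrite dist_le1 euv orbT.
have : d u v != 0 by rewrite dist0E.
by move: le; case: (d u v) => [|[|]].
Qed.

Lemma dist1_edge u v : d u v = 1 -> e u v.
Proof.
move=> h.
have : d u v <= 1 by rewrite h.
rewrite dist_le1 => /orP [/eqP E|//].
by move: h; rewrite E distxx.
Qed.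

Lemma dist_step u v k : d u v = k.+1 -> exists2 w, e u w & d w v = k.
Proof.
move=> h.
have := dist_reach u v; rewrite h /=.
have ne : u != v by rewrite -dist0E h.
rewrite (negbTE ne) /= => /existsP [w /andP [euw r]].
exists w => //.
have le : d w v <= k by apply: dist_min.
have := dist_tri u w v; rewrite h (dist_edge euw) => ge.
lia.
Qed.

Lemma dist_lip u w v : e u w -> d u v <= (d w v).+1.
Proof. by move=> euw; have := dist_tri u w v; rewrite (dist_edge euw). Qed.

Lemma dist_ecc u v : d u v <= ecc e v.
Proof. exact: (leq_bigmax (F := fun u => d u v)). Qed.


Lemma A1 u v w x : e v w -> d u w = d u v + 1 -> d v x = d w x + 1 ->
  d u v + d v x <= d u x + 1.
Proof.
move=> evw h1 h2.
have dvw := dist_edge evw.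
have H : d u v + d v x - 1 <= d u x.
  apply: ha1 evw; rewrite /interval inE; apply/eqP; lia.
lia.
Qed.

Lemma dist2 u v w : e u w -> e w v -> u != v -> ~~ e u v -> d u v = 2.
Proof.
move=> euw ewv ne nuv.
have := dist_tri u w v; rewrite (dist_edge euw) (dist_edge ewv) => le.
have h0 : d u v != 0 by rewrite dist0E.
have h1 : d u v != 1.
  by apply/negP => /eqP /dist1_edge; rewrite (negbTE nuv).
lia.
Qed.

Lemma neq_of_dist u v : d u v != d v v -> u != v.
Proof. by apply: contra => /eqP ->. Qed.

Lemma clique s t a p : d s t = 4 -> e s a -> d a t = 3 -> e s p -> d p t = 3 ->
  a != p -> e a p.
Proof.
move=> st sa a_t sp pt ap.
apply/negPn/negP => nap.
have as_ : e a s by rewrite esym.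
have dap := dist2 as_ sp ap nap.
have dsp := dist_edge sp.
have h1 : d t s = d t a + 1 by rewrite (distC t s) (distC t a); lia.
have h2 : d a p = d s p + 1 by lia.
have := A1 as_ h1 h2.
rewrite (distC t a) (distC t p); lia.
Qed.

Section Four.
Variables (s t : T) (M : nat).
Hypothesis st4 : d s t = 4.
Hypothesis hs : forall x, d x s <= M.
Hypothesis ht : forall x, d x t <= M.

Lemma plateau c p r z : d s c = 2 -> d c t = 2 -> e s p -> e p c -> e c r -> e r t ->
  M <= d z c -> [/\ d z s = M, d z p = M, d z c = M, d z r = M & d z t = M].
Proof.
move=> sc ct sp pc cr rt hc.
have dsp := dist_edge sp; have dpc := dist_edge pc.
have dcr := dist_edge cr; have drt := dist_edge rt.
have dpt : d p t = 3.
  have := dist_tri p c t; have := dist_tri s p t; lia.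
have dsr : d s r = 3.
  have := dist_tri s c r; have := dist_tri s r t; lia.
have zs := hs z; have zt := ht z.
have zs' : d z s = d s z by rewrite distC.
have l1 := dist_tri z s p; have l2 := dist_tri z p s.
have l3 := dist_tri z p c; have l4 := dist_tri z c p.
have l5 := dist_tri z c r; have l6 := dist_tri z r c.
have l7 := dist_tri z r t; have l8 := dist_tri z t r.
rewrite (distC p s) in l2; rewrite (distC c p) in l4.
rewrite (distC r c) in l6; rewrite (distC t r) in l8.
have ha : d z c != d z p + 1.
  apply/eqP => E.
  have := A1 pc E (_ : d p t = d c t + 1); lia.
have hb : d z p != d z s + 1.
  apply/eqP => E.
  have := A1 sp E (_ : d s t = d p t + 1); lia.
have hc' : d z c != d z r + 1.
  apply/eqP => E.
  have rc : e r c by rewrite esym.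
  have := A1 rc E (_ : d r s = d c s + 1).
  rewrite (distC r s) (distC c s) (distC z s); lia.
have hd : d z r != d z t + 1.
  apply/eqP => E.
  have tr : e t r by rewrite esym.
  have := A1 tr E (_ : d t s = d r s + 1).
  rewrite (distC t s) (distC r s) (distC z s); lia.
by split; lia.
Qed.

Lemma toL1 c z w : d s c = 2 -> d c t = 2 -> d z s = M -> d z c = M -> d z t = M ->
  e s w -> d z w + 1 = M -> d w t = 3.
Proof.
move=> sc ct zs zc zt sw zw.
have dsw := dist_edge sw.
have ws : e w s by rewrite esym.
have l1 := dist_tri w s t; have l2 := dist_tri s w t.
have l3 := dist_tri w s c; have l4 := dist_tri w c t.
rewrite (distC w s) in l1 l3.
have h5 : d w t != 5.
  apply/eqP => E.
  have := A1 ws (_ : d z s = d z w + 1) (_ : d w t = d s t + 1); lia.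
have h3 : d w c != 3.
  apply/eqP => E.
  have := A1 ws (_ : d z s = d z w + 1) (_ : d w c = d s c + 1); lia.
have h4 : d w t != 4.
  apply/eqP => E.
  have wc2 : d w c = 2 by lia.
  have [x wx xc] := dist_step wc2.
  have exc := dist1_edge xc.
  have dwx := dist_edge wx.
  have dxt : d x t = 3.
    have := dist_tri x c t; have := dist_tri w x t; lia.
  have m1 := dist_tri z x c; have m2 := dist_tri z w x.
  case: (eqVneq (d z x) M) => [zx|zx].
    have := A1 wx (_ : d z x = d z w + 1) (_ : d w t = d x t + 1); lia.
  have := A1 exc (_ : d z c = d z x + 1) (_ : d x t = d c t + 1); lia.
lia.
Qed.

Lemma toL2 c q z : d s c = 2 -> d c t = 2 -> d z c = M -> e c q -> d z q + 1 = M ->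
  d s q = 2 /\ d q t = 2.
Proof.
move=> sc ct zc cq zq.
have dcq := dist_edge cq.
have l1 := dist_tri s c q; have l2 := dist_tri q c t; have l3 := dist_tri s q t.
rewrite (distC q c) in l2.
have zs := hs z; have zt := ht z.
have h1 : d s q != 3.
  apply/eqP => E.
  have := A1 cq (_ : d s q = d s c + 1) (_ : d c z = d q z + 1).
  rewrite (distC c z) (distC q z) (distC s z); lia.
have h2 : d q t != 3.
  apply/eqP => E.
  have := A1 cq (_ : d t q = d t c + 1) (_ : d c z = d q z + 1).
  rewrite (distC c z) (distC q z) (distC t z) (distC t q) (distC t c); lia.
lia.
Qed.

Lemma common_pred c q : d s c = 2 -> d c t = 2 -> d s q = 2 -> d q t = 2 -> e c q ->
  exists p, [/\ e s p, e p c & e p q].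
Proof.
move=> sc ct sq qt cq.
have [p1 sp1 p1c] := dist_step sc.
have [a sa aq] := dist_step sq.
have ep1c := dist1_edge p1c; have eaq := dist1_edge aq.
have dsp1 := dist_edge sp1; have dsa := dist_edge sa.
have p1t : d p1 t = 3 by have := dist_tri p1 c t; have := dist_tri s p1 t; lia.
have a_t : d a t = 3 by have := dist_tri a q t; have := dist_tri s a t; lia.
case: (boolP (e p1 q)) => [p1q|np1q]; first by exists p1.
case: (boolP (e a c)) => [ac|nac]; first by exists a.
case: (eqVneq p1 a) => [E|ne].
  by move: np1q; rewrite E eaq.
have ep1a := clique st4 sp1 p1t sa a_t ne.
have p1q2 : d p1 q = 2.
  apply: dist2 ep1c cq _ np1q.
  by apply/negP => /eqP E; move: dsp1; rewrite E sq.
have qa : e q a by rewrite esym.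
have nca : ~~ e c a by rewrite esym.
have ca2 : d c a = 2.
  apply: dist2 cq qa _ nca.
  by apply/negP => /eqP E; move: sc; rewrite E dsa.
have h1 : d p1 q = d p1 c + 1 by rewrite p1q2 (dist_edge ep1c).
have h2 : d c a = d q a + 1 by rewrite ca2 (distC q a) (dist_edge eaq).
have := A1 cq h1 h2.
by rewrite (dist_edge ep1a) (dist_edge ep1c) ca2.
Qed.

Lemma crossing c q p z z' : d s c = 2 -> d c t = 2 -> d s q = 2 -> d q t = 2 ->
  e c q -> e s p -> e p c -> e p q ->
  M <= d z c -> d z q < M -> M <= d z' q -> M <= d z' c.
Proof.
move=> sc ct sq qt cq sp pc pq zc zq z'q.
rewrite leqNgt; apply/negP => z'c.
have [r1 cr1 r1t] := dist_step ct.
have [r2 qr2 r2t] := dist_step qt.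
have er1t := dist1_edge r1t; have er2t := dist1_edge r2t.
have [Zs Zp Zc _ Zt] := plateau sc ct sp pc cr1 er1t zc.
have [Z's Z'p Z'q _ Z't] := plateau sq qt sp pq qr2 er2t z'q.
have dcq := dist_edge cq.
have ZQ : d z q + 1 = M.
  have := dist_tri z q c; rewrite (distC q c).
  by clear -zq Zc dcq; lia.
have Z'C : d z' c + 1 = M.
  have := dist_tri z' c q.
  by clear -z'c Z'q dcq; lia.
have hsz : d s z = (d z q).+1 by rewrite distC Zs -ZQ addn1.
have hsz' : d s z' = (d z' c).+1 by rewrite distC Z's -Z'C addn1.
have [w sw wz] := dist_step hsz.
have [w' sw' w'z'] := dist_step hsz'.
have zw : d z w + 1 = M by rewrite distC wz.
have z'w' : d z' w' + 1 = M by rewrite distC w'z'.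
have wt := toL1 sc ct Zs Zc Zt sw zw.
have w't := toL1 sq qt Z's Z'q Z't sw' z'w'.
have dsp := dist_edge sp; have dpc := dist_edge pc; have dpq := dist_edge pq.
have pt : d p t = 3.
  have := dist_tri p c t; have := dist_tri s p t.
  by clear -dpc ct dsp st4; lia.
have dsw := dist_edge sw; have dsw' := dist_edge sw'.
have wp : w != p.
  by apply/negP => /eqP E; move: zw; rewrite E Zp; clear; lia.
have w'p : w' != p.
  by apply/negP => /eqP E; move: z'w'; rewrite E Z'p; clear; lia.
have ewp := clique st4 sw wt sp pt wp.
have ew'p := clique st4 sw' w't sp pt w'p.
have ewq : e w q.
  apply/negPn/negP => nwq.
  have wq2 : d w q = 2.
    apply: dist2 ewp pq _ nwq.
    by apply/negP => /eqP E; move: dsw; rewrite E sq.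
  have h1 : d z p = d z w + 1 by rewrite Zp zw.
  have h2 : d w q = d p q + 1 by rewrite wq2 dpq.
  have := A1 ewp h1 h2.
  by rewrite wq2; clear -zw ZQ; lia.
have ew'c : e w' c.
  apply/negPn/negP => nw'c.
  have w'c2 : d w' c = 2.
    apply: dist2 ew'p pc _ nw'c.
    by apply/negP => /eqP E; move: dsw'; rewrite E sc.
  have h1 : d z' p = d z' w' + 1 by rewrite Z'p z'w'.
  have h2 : d w' c = d p c + 1 by rewrite w'c2 dpc.
  have := A1 ew'p h1 h2.
  by rewrite w'c2; clear -z'w' Z'C; lia.
have nwc : ~~ e w c.
  apply/negP => wc.
  have [_ Zw _ _ _] := plateau sc ct sw wc cr1 er1t zc.
  by move: zw; rewrite Zw; clear; lia.
have nw'q : ~~ e w' q.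
  apply/negP => w'q.
  have [_ Zw' _ _ _] := plateau sq qt sw' w'q qr2 er2t z'q.
  by move: z'w'; rewrite Zw'; clear; lia.
have ww' : w != w'.
  by apply/negP => /eqP E; move: nw'q; rewrite -E ewq.
have eww' := clique st4 sw wt sw' w't ww'.
have qc : e q c by rewrite esym.
have wc2 : d w c = 2.
  apply: dist2 ewq qc _ nwc.
  by apply/negP => /eqP E; move: dsw; rewrite E sc.
have c'w' : e c w' by rewrite esym.
have qw'2 : d q w' = 2.
  apply: dist2 qc c'w' _ _.
    by apply/negP => /eqP E; move: sq; rewrite E dsw'.
  by rewrite esym.
have h1 : d w c = d w q + 1 by rewrite wc2 (dist_edge ewq).
have h2 : d q w' = d c w' + 1 by rewrite qw'2 (dist_edge c'w').
have := A1 qc h1 h2.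
by rewrite (dist_edge eww') (dist_edge ewq) qw'2.
Qed.

Lemma good_exists : exists c, [/\ d s c = 2, d c t = 2 & forall z, d z c < M].
Proof.
have M4 : 4 <= M by have := hs t; rewrite distC st4.
have [k eM] : exists k, M = k.+1 by exists M.-1; rewrite prednK //; apply: leq_trans M4.
have key : forall n c, d s c = 2 -> d c t = 2 -> #|[set z | M <= d z c]| <= n ->
    exists c', [/\ d s c' = 2, d c' t = 2 & forall z, d z c' < M].
  elim=> [|n IH] c sc ct hb.
    exists c; split => // z.
    move: hb; rewrite leqn0 => /eqP /cards0_eq E.
    rewrite ltnNge; apply/negP => hz.
    have : z \in [set z | M <= d z c] by rewrite inE.
    by rewrite E inE.
  case: (set_0Vmem [set z | M <= d z c]) => [E|[z]].
    exists c; split => // z.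
    rewrite ltnNge; apply/negP => hz.
    have : z \in [set z | M <= d z c] by rewrite inE.
    by rewrite E inE.
  rewrite inE => zc.
  have [p sp pc'] := dist_step sc.
  have [r cr rt'] := dist_step ct.
  have [_ _ Zc _ _] := plateau sc ct sp (dist1_edge pc') cr (dist1_edge rt') zc.
  have hcz : d c z = k.+1 by rewrite distC Zc eM.
  have [q cq qz] := dist_step hcz.
  have zq : d z q + 1 = M by rewrite distC qz eM addn1.
  have [sq qt] := toL2 sc ct Zc cq zq.
  have [p' [sp' p'c p'q]] := common_pred sc ct sq qt cq.
  have zq' : d z q < M by rewrite -zq addn1.
  have sub : [set z' | M <= d z' q] \subset [set z' | M <= d z' c] :\ z.
    apply/subsetP => z'; rewrite !inE => hz'.
    apply/andP; split.
      by apply/negP => /eqP E; move: hz'; rewrite E leqNgt zq'.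
    exact: crossing sc ct sq qt cq sp' p'c p'q zc zq' hz'.
  have := subset_leq_card sub.
  move: hb; rewrite (cardsD1 z) inE zc /= add1n ltnS => hb le.
  exact: IH q sq qt (leq_trans le hb).
have s4 : d s t = 3.+1 by [].
have [p0 sp0 p0t] := dist_step s4.
have [c0 p0c0 c0t] := dist_step p0t.
have sc0 : d s c0 = 2.
  have := dist_tri s p0 c0; have := dist_tri s c0 t.
  rewrite (dist_edge sp0) (dist_edge p0c0) c0t st4.
  by clear; lia.
exact: key _ c0 sc0 c0t (leqnn _).
Qed.

End Four.

Lemma ecc_lt c M : 0 < M -> (forall z, d z c < M) -> ecc e c < M.
Proof.
move=> M0 h.
have : ecc e c <= M.-1.
  by apply/bigmax_leqP => z _; rewrite -ltnS prednK.
by rewrite -ltnS prednK.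
Qed.

Lemma main4 s t : d s t = 4 -> exists c,
  [/\ d s c = 2, d c t = 2 & ecc e c < maxn (ecc e s) (ecc e t)].
Proof.
move=> st4.
have hs : forall x, d x s <= maxn (ecc e s) (ecc e t).
  by move=> x; apply: leq_trans (dist_ecc x s) (leq_maxl _ _).
have ht : forall x, d x t <= maxn (ecc e s) (ecc e t).
  by move=> x; apply: leq_trans (dist_ecc x t) (leq_maxr _ _).
have [c [sc ct hc]] := good_exists st4 hs ht.
exists c; split => //.
apply: ecc_lt hc.
by have := hs t; rewrite distC st4; case: (maxn _ _).
Qed.

Lemma ecc_step s s' t : e s s' -> d s t = (d s' t).+1 -> 0 < d s' t ->
  ecc e s' <= maxn (ecc e s) (ecc e t).
Proof.
move=> ss' st pos.
apply/bigmax_leqP => z _.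
have l1 := dist_tri z s s'; rewrite (dist_edge ss') in l1.
have es := dist_ecc z s; have et := dist_ecc z t.
case: (leqP (d z s') (d z s)) => [le|lt].
  by apply: leq_trans le (leq_trans es (leq_maxl _ _)).
have E : d z s' = d z s + 1 by clear -l1 lt; lia.
have h2 : d s t = d s' t + 1 by rewrite st addn1.
have h := A1 ss' E h2.
have le : d z s' <= d z t by clear -h E h2 pos; lia.
exact: leq_trans le (leq_trans et (leq_maxr _ _)).
Qed.

Lemma general k : forall s t, d s t = k -> 4 <= k -> exists c,
  [/\ c \in interval e s t, c != s, c != t & ecc e c < maxn (ecc e s) (ecc e t)].
Proof.
elim: k => [|k IH] s t st hk; first by [].
case: (eqVneq k 3) => [k3|k3].
  have st4 : d s t = 4 by rewrite st k3.
  have [c [sc ct hc]] := main4 st4.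
  exists c; split => //.
  - by rewrite /interval inE sc ct st4.
  - by apply/negP => /eqP E; move: sc; rewrite E distxx.
  - by apply/negP => /eqP E; move: ct; rewrite E distxx.
have k4 : 4 <= k by clear -hk k3; lia.
have [s' ss' s't] := dist_step st.
have [c [ci cs' ct hc]] := IH s' t s't k4.
have st' : d s t = (d s' t).+1 by rewrite st s't.
have pos : 0 < d s' t by rewrite s't; apply: leq_trans k4.
have he := ecc_step ss' st' pos.
move: ci; rewrite /interval inE s't => /eqP ci.
have l1 := dist_tri s s' c; rewrite (dist_edge ss') in l1.
have l2 := dist_tri s c t.
exists c; split => //.
- by rewrite /interval inE st; apply/eqP; clear -l1 l2 ci st; lia.
- apply/negP => /eqP E; move: ci; rewrite E distC (dist_edge ss') st.
  by clear; lia.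
- apply: leq_trans hc _.
  by rewrite geq_max he leq_maxr.
Qed.

End Proofs.


Theorem theorem7 (T : finType) (e : rel T) :
  simple_graph e -> connected_graph e -> alpha1_metric e ->
  forall s t : T, 4 <= dist e s t ->
  exists c : T, [/\ c \in interval e s t, c != s, c != t &
                   ecc e c < maxn (ecc e s) (ecc e t)].
Proof.
move=> [esym eirr] econn ha1 s t hk.
exact: (general esym eirr econn ha1 (erefl (dist e s t)) hk).
Qed.
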